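(* Let $X$ be a compact metric space with metric $d$, let $f:X\to X$ be continuous, and let $A\subset X$. If $A$ is a uniformly chaotic set, then there exists a strictly increasing sequence $Q$ of positive integers such that $A$ is a distributional chaotic set in the sequence $Q$.
   Context: A set $B\subset X$ is uniformly proximal if for every $\epsilon>0$ there is $k\in\mathbb N$ with $d(f^k x,f^k y)<\epsilon$ for all $x,y\in B$; it is uniformly rigid if for every $\epsilon>0$ there is $k\in\mathbb N$ with $d(f^k x,x)<\epsilon$ for all $x\in B$. $A$ is uniformly chaotic if there are Cantor sets (subsets homeomorphic to the Cantor ternary set) $C_1\subset C_2\subset\cdots$ with $A=\bigcup_i C_i$ and each $C_i$ both uniformly proximal and uniformly rigid. For a strictly increasing sequence $Q=\{m_i\}$ of positive integers, $x,y\in X$, $t>0$, $n\ge1$, put $\Phi^n_{(xy,Q)}(t)=\frac1n\#\{1\le i\le n: d(f^{m_i}(x),f^{m_i}(y))\le t\}$, $\Phi_{(xy,Q)}(t)=\liminf_n\Phi^n_{(xy,Q)}(t)$, $\Phi^\star_{(xy,Q)}(t)=\limsup_n\Phi^n_{(xy,Q)}(t)$. A pair $(x,y)$ is a distributional scrambled pair in $Q$ if $\Phi^\star_{(xy,Q)}(t)=1$ for all $t>0$ and $\Phi_{(xy,Q)}(s)=0$ for some $s>0$. $A$ is a distributional chaotic set in $Q$ if every pair $(x,y)\in A\times A$ with $x\ne y$ is a distributional scrambled pair in $Q$. *)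

(* Defs.v *)
From HB Require Import structures.
From mathcomp Require Import all_boot all_order all_algebra.
From mathcomp Require Import all_classical all_reals all_analysis.
Set Implicit Arguments. Unset Strict Implicit. Unset Printing Implicit Defensive.
Import Order.TTheory GRing.Theory Num.Theory.
Import numFieldNormedType.Exports.
Local Open Scope classical_set_scope.
Local Open Scope ring_scope.

Definition cantor_ternary (R : realType) : set R :=
  [set x | exists a : nat -> bool,
     (fun n => \sum_(k < n) ((a k)%:R * 2 / 3 ^+ k.+1 : R)) @ \oo --> x].

Definition is_cantor_set (R : realType) (X : metricType R) (C : set X) : Prop :=
  exists (g : X -> R) (h : R -> X),
    [/\ {within C, continuous g},
        {within (@cantor_ternary R), continuous h},
        (forall x, C x -> (@cantor_ternary R) (g x) /\ h (g x) = x) &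
        (forall y, (@cantor_ternary R) y -> C (h y) /\ g (h y) = y)].

Definition uniformly_proximal (R : realType) (X : metricType R) (f : X -> X)
    (B : set X) : Prop :=
  forall eps : R, 0 < eps -> exists k : nat, (0 < k)%N /\
    forall x y, B x -> B y -> mdist (iter k f x) (iter k f y) < eps.

Definition uniformly_rigid (R : realType) (X : metricType R) (f : X -> X)
    (B : set X) : Prop :=
  forall eps : R, 0 < eps -> exists k : nat, (0 < k)%N /\
    forall x, B x -> mdist (iter k f x) x < eps.

Definition uniformly_chaotic (R : realType) (X : metricType R) (f : X -> X)
    (A : set X) : Prop :=
  exists C : nat -> set X,
    [/\ forall i, is_cantor_set (C i),
        forall i, C i `<=` C i.+1,
        A = \bigcup_i C i &
        forall i, uniformly_proximal f (C i) /\ uniformly_rigid f (C i)].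

(* Q = {m_1 < m_2 < ...} represented 0-indexed: m_(i+1) = Q i. *)
Definition pos_strict_incr (Q : nat -> nat) : Prop :=
  (0 < Q 0)%N /\ forall i, (Q i < Q i.+1)%N.

(* Phi^n_(xy,Q)(t) for n >= 1, here PhiN ... n t = Phi^(n+1)(t). *)
Definition PhiN (R : realType) (X : metricType R) (f : X -> X) (Q : nat -> nat)
    (x y : X) (n : nat) (t : R) : R :=
  (#|[set i : 'I_n.+1 | mdist (iter (Q i) f x) (iter (Q i) f y) <= t]|)%:R
    / (n.+1)%:R.

Definition Phi (R : realType) (X : metricType R) (f : X -> X) (Q : nat -> nat)
    (x y : X) (t : R) : R := limn_inf (fun n => PhiN f Q x y n t).

Definition Phi_star (R : realType) (X : metricType R) (f : X -> X)
    (Q : nat -> nat) (x y : X) (t : R) : R :=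
  limn_sup (fun n => PhiN f Q x y n t).

Definition distr_scrambled_pair (R : realType) (X : metricType R) (f : X -> X)
    (Q : nat -> nat) (x y : X) : Prop :=
  (forall t : R, 0 < t -> Phi_star f Q x y t = 1) /\
  (exists s : R, 0 < s /\ Phi f Q x y s = 0).

Definition distr_chaotic_set (R : realType) (X : metricType R) (f : X -> X)
    (Q : nat -> nat) (A : set X) : Prop :=
  forall x y, A x -> A y -> x <> y -> distr_scrambled_pair f Q x y.

(* Main.v *)
Require Import Defs.
From HB Require Import structures.
From mathcomp Require Import all_boot all_order all_algebra.
From mathcomp Require Import all_classical all_reals all_analysis.
From mathcomp Require Import zify ring lra.
Import Order.TTheory GRing.Theory Num.Theory.
Local Open Scope classical_set_scope.
Local Open Scope ring_scope.

Lemma many_times (R : realType) (T : Type) (S : T -> Prop) (h : nat -> T -> R) :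
  (forall k t, 0 <= h k t) ->
  (forall eps : R, 0 < eps -> exists k, (0 < k)%N /\ forall t, S t -> h k t < eps) ->
  (forall k, (0 < k)%N -> (forall t, S t -> h k t = 0) ->
     forall N, exists k', [/\ (N <= k')%N, (0 < k')%N & forall t, S t -> h k' t = 0]) ->
  forall (eps : R) N, 0 < eps ->
    exists k, [/\ (N <= k)%N, (0 < k)%N & forall t, S t -> h k t < eps].
Proof.
move=> h0 Hex Hcl eps N eps0.
have [[k [k0 hk]] | nofix] :=
  pselect (exists k, (0 < k)%N /\ forall t, S t -> h k t = 0).
  have [k' [Nk' k'0 hk']] := Hcl k k0 hk N.
  by exists k'; split => // t St; rewrite hk'.
have claim : forall M, exists2 d : R, 0 < d &
    forall k, (0 < k)%N -> (k < M)%N -> exists2 t, S t & d <= h k t.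
  elim=> [|M [d d0 Hd]]; first by exists 1 => // k _; rewrite ltn0.
  have [M0|M0] := posnP M.
    by exists d => // k k0 kM; exfalso; lia.
  have [t St ht] : exists2 t, S t & 0 < h M t.
    apply: contrapT => H; apply: nofix; exists M; split => // t St.
    apply/eqP; rewrite eq_le h0 andbT leNgt; apply/negP => hp; apply: H.
    by exists t.
  exists (Num.min d (h M t)); first by rewrite lt_min d0 ht.
  move=> k k0; rewrite ltnS leq_eqVlt => /orP[/eqP->|kM].
    by exists t => //; rewrite ge_min lexx orbT.
  by have [t' St' ht'] := Hd k k0 kM; exists t' => //; rewrite ge_min ht'.
have [d d0 Hd] := claim N.
have [k [k0 hk]] := Hex (Num.min eps d) ltac:(by rewrite lt_min eps0 d0).
exists k; case: (leqP N k) => Nk.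
  split => // t St; apply: (lt_le_trans (hk t St)); by rewrite ge_min lexx.
have [t St dt] := Hd k k0 Nk; have := hk t St.
by rewrite lt_min => /andP[_]; rewrite ltNge dt.
Qed.
Fixpoint ba (k : nat) : nat := if k is k'.+1 then (k'.+2 * (ba k').+1)%N else 0%N.

Lemma ba_lt k : (ba k < ba k.+1)%N.
Proof. rewrite /=; nia. Qed.

Lemma ba_ge k : (k <= ba k)%N.
Proof. elim: k => //= k IH; nia. Qed.

Lemma ba_mono k l : (k <= l)%N -> (ba k <= ba l)%N.
Proof. apply: (@homo_leq _ ba leq) => //; [exact: leq_trans|move=> i; exact: ltnW (ba_lt i)]. Qed.

Fixpoint blk (i : nat) : nat :=
  if i is i'.+1 then (if i'.+1 == ba (blk i').+1 then (blk i').+1 else blk i') else 0%N.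

Lemma blk_inv i : (ba (blk i) <= i < ba (blk i).+1)%N.
Proof.
elim: i => [|i IH]; first by [].
rewrite [blk _.+1]/=; case: eqP => [e|ne].
  have := ba_lt (blk i).+1; move: e; rewrite /= => e. lia.
move: IH => /andP[h1 h2]; apply/andP; split; first exact: leqW.
by rewrite ltn_neqAle h2 andbT; apply/eqP.
Qed.

Lemma blk_uniq k i : (ba k <= i < ba k.+1)%N -> blk i = k.
Proof.
move=> /andP[h1 h2]; have /andP[g1 g2] := blk_inv i.
case: (ltngtP (blk i) k) => // c.
- have := @ba_mono _ _ c; lia.
- have := @ba_mono _ _ c; lia.
Qed.

Fixpoint mkQ (sel : nat -> nat -> nat) (i : nat) : nat :=
  if i is i'.+1 then sel (blk i) (mkQ sel i').+1 else sel 0%N 1%N.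

Lemma build_Q (S : nat -> nat -> Prop) :
  (forall k N, exists m, (N <= m)%N /\ S k m) ->
  exists Q, pos_strict_incr Q /\ forall k i, (ba k <= i < ba k.+1)%N -> S k (Q i).
Proof.
move=> H; pose sel k N := proj1_sig (cid (H k N)).
have selP k N : (N <= sel k N)%N /\ S k (sel k N) by rewrite /sel; case: cid.
exists (mkQ sel); split; first split.
- by have [] := selP 0%N 1%N.
- by move=> i /=; have [] := selP (blk i.+1) (mkQ sel i).+1.
move=> k i /blk_uniq <-; case: i => [|i] /=; first by have [] := selP 0%N 1%N.
by have [] := selP (blk i.+1) (mkQ sel i).+1.
Qed.
Lemma card_split p q (P : pred nat) : (q <= p)%N ->
  #|[set i : 'I_p | P i]| = (\sum_(0 <= i < q) P i + \sum_(q <= i < p) P i)%N.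
Proof.
move=> qp; rewrite -big_cat_nat //= big_mkord -sum1_card big_mkcond /=.
apply: eq_bigr => i _; case: ifPn => [/set_mem/= ->//|H].
case: (boolP (P i)) => // Pi; exfalso; move/negP: H; apply; exact: mem_set.
Qed.

Lemma limsup1 (R : realType) (u : nat -> R) : (forall n, u n <= 1) ->
  (forall eps : R, 0 < eps -> forall n, exists m, (n <= m)%N /\ 1 - eps <= u m) ->
  limn_sup u = 1.
Proof.
move=> ub H.
have E : sups u = fun _ => 1.
  apply/funext => n; apply/eqP; rewrite eq_le; apply/andP; split.
    apply: ge_sup; first by exists (u n); exists n => /=.
    by move=> _ [m _ <-]; exact: ub.
  apply/ler_addgt0Pr => e e0.
  have [m [nm hm]] := H e e0 n.
  have : u m <= sup (sdrop u n).
    apply: ub_le_sup; last by exists m.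
    by exists 1 => _ [k _ <-]; exact: ub.
  rewrite /sups /=; lra.
by rewrite /limn_sup E; apply: lim_cst.
Qed.

Lemma liminf0 (R : realType) (u : nat -> R) : (forall n, 0 <= u n) ->
  (forall eps : R, 0 < eps -> forall n, exists m, (n <= m)%N /\ u m <= eps) ->
  limn_inf u = 0.
Proof.
move=> lb H.
have E : infs u = fun _ => 0.
  apply/funext => n; apply/eqP; rewrite eq_le; apply/andP; split; last first.
    apply: lb_le_inf; first by exists (u n); exists n => /=.
    by move=> _ [m _ <-]; exact: lb.
  apply/ler_addgt0Pr => e e0.
  have [m [nm hm]] := H e e0 n.
  have : inf (sdrop u n) <= u m.
    apply: ge_inf; last by exists m.
    by exists 0 => _ [k _ <-]; exact: lb.
  rewrite /infs /=; lra.
by rewrite /limn_inf E; apply: lim_cst.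
Qed.
Lemma arch_inv (R : realType) (e : R) : 0 < e ->
  exists J, forall j, (J <= j)%N -> (j.+1%:R)^-1 < e.
Proof.
move=> e0; exists (Num.trunc e^-1) => j Jj.
rewrite invf_plt ?posrE ?ltr0Sn //.
apply: (lt_le_trans (truncnS_gt _)); by rewrite ler_nat ltnS.
Qed.

Lemma frac_hi (R : realType) (k q c : nat) (e : R) : (k.+1%:R)^-1 < e ->
  (k.+2 * q.+1 - q <= c)%N -> 1 - e <= c%:R / (k.+2 * q.+1)%:R.
Proof.
move=> ke hc; rewrite ler_pdivlMr ?ltr0n ?muln_gt0 //.
have h1 : 1 < e * k.+1%:R.
  by rewrite -ltr_pdivrMr ?ltr0Sn // div1r.
have h2 : (k.+2 * q.+1 - q)%:R <= (c%:R : R) by rewrite ler_nat.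
move: h2; rewrite natrB; last by nia.
have e1 : (k.+2%:R : R) = k%:R + 2 by rewrite -addn2 natrD.
have e2 : (k.+1%:R : R) = k%:R + 1 by rewrite -addn1 natrD.
have e3 : (q.+1%:R : R) = q%:R + 1 by rewrite -addn1 natrD.
rewrite natrM e1 e3; move: h1; rewrite e2.
have q0 : (0 : R) <= q%:R by [].
have k0 : (0 : R) <= k%:R by [].
have e0 : 0 < e by apply: lt_trans ke; rewrite invr_gt0 ltr0Sn.
move=> h1 h2.
have h3 : q%:R + 1 < e * (k%:R + 1) * (q%:R + 1) by nra.
have h4 : e * (k%:R + 1) * (q%:R + 1) <= e * (k%:R + 2) * (q%:R + 1) by nra.
nra.
Qed.

Lemma frac_lo (R : realType) (k q c : nat) (e : R) : (k.+1%:R)^-1 < e ->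
  (c <= q)%N -> c%:R / (k.+2 * q.+1)%:R <= e.
Proof.
move=> ke hc; rewrite ler_pdivrMr ?ltr0n ?muln_gt0 //.
have h1 : 1 < e * k.+1%:R.
  by rewrite -ltr_pdivrMr ?ltr0Sn // div1r.
have h2 : c%:R <= (q%:R : R) by rewrite ler_nat.
have e1 : (k.+2%:R : R) = k%:R + 2 by rewrite -addn2 natrD.
have e2 : (k.+1%:R : R) = k%:R + 1 by rewrite -addn1 natrD.
have e3 : (q.+1%:R : R) = q%:R + 1 by rewrite -addn1 natrD.
rewrite natrM e1 e3; move: h1; rewrite e2.
have q0 : (0 : R) <= q%:R by [].
have k0 : (0 : R) <= k%:R by [].
have e0 : 0 < e by apply: lt_trans ke; rewrite invr_gt0 ltr0Sn.
move=> h1.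
have h3 : q%:R + 1 < e * (k%:R + 1) * (q%:R + 1) by nra.
have h4 : e * (k%:R + 1) * (q%:R + 1) <= e * (k%:R + 2) * (q%:R + 1) by nra.
nra.
Qed.

Lemma PhiN_split (R : realType) (X : metricType R) (f : X -> X) (Q : nat -> nat)
   (x y : X) (n : nat) (t : R) q : (q <= n.+1)%N ->
  PhiN f Q x y n t =
  ((\sum_(0 <= i < q) ((mdist (iter (Q i) f x) (iter (Q i) f y) <= t)%R : nat) +
    \sum_(q <= i < n.+1) ((mdist (iter (Q i) f x) (iter (Q i) f y) <= t)%R : nat))%N)%:R
   / n.+1%:R.
Proof.
move=> qn; rewrite /PhiN.
by rewrite (@card_split _ q (fun i : nat => (mdist (iter (Q i) f x) (iter (Q i) f y) <= t)%R)) .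
Qed.

Theorem theorem4p2 (R : realType) (X : metricType R) (f : X -> X) (A : set X) :
  compact [set: X] -> continuous f -> uniformly_chaotic f A ->
  exists Q : nat -> nat, pos_strict_incr Q /\ distr_chaotic_set f Q A.
Proof.
move=> _ _; rewrite /uniformly_chaotic => -[C [_ Cmono AE HC]].
have Cle : forall i j, (i <= j)%N -> C i `<=` C j.
  move=> i j; apply: (@homo_leq _ C (fun A B => A `<=` B)).
  - by move=> ?.
  - by move=> ? ? ? h1 h2; exact: subset_trans h1 h2.
  - exact: Cmono.
pose Prox j m := forall x y, C j x -> C j y ->
  mdist (iter m f x) (iter m f y) < (j.+1%:R)^-1.
pose Rig j m := forall x, C j x -> mdist (iter m f x) x < (j.+1%:R)^-1.
have ProxP : forall j N, exists m, (N <= m)%N /\ Prox j m.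
  move=> j N.
  have ej : 0 < (j.+1%:R : R)^-1 by rewrite invr_gt0 ltr0Sn.
  have [|||k [Nk _ hk]] := @many_times R (X * X)%type
      (fun p => C j p.1 /\ C j p.2)
      (fun k p => mdist (iter k f p.1) (iter k f p.2)) _ _ _ (j.+1%:R)^-1 N ej.
  - by move=> *; exact: mdist_ge0.
  - move=> e e0; have [k [k0 hk]] := (HC j).1 e e0.
    by exists k; split => // -[a b] [/= Ca Cb]; exact: hk.
  - move=> k k0 hk M; exists (M + k)%N; split; [exact: leq_addr|by rewrite addn_gt0 k0 orbT|].
    move=> [a b] Sab; rewrite !iterD.
    have /mdist_positivity /= -> := hk _ Sab; exact: mdistxx.
  by exists k; split => // a b Ca Cb; exact: (hk (a, b)).
have RigP : forall j N, exists m, (N <= m)%N /\ Rig j m.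
  move=> j N.
  have ej : 0 < (j.+1%:R : R)^-1 by rewrite invr_gt0 ltr0Sn.
  have [|||k [Nk _ hk]] := @many_times R X (C j)
      (fun k a => mdist (iter k f a) a) _ _ _ (j.+1%:R)^-1 N ej.
  - by move=> *; exact: mdist_ge0.
  - by move=> e e0; have [k [k0 hk]] := (HC j).2 e e0; exists k.
  - move=> k k0 hk M; exists (M.+1 * k)%N; split.
    + by rewrite -[X in (X <= _)%N]muln1 leq_mul.
    + by rewrite muln_gt0 k0.
    move=> a Ca; have /mdist_positivity e := hk _ Ca.
    rewrite iterM (iter_fix _ e); exact: mdistxx.
  by exists k.
pose Sk k m := if odd k then Rig k./2 m else Prox k./2 m.
have [Q [HQ HQb]] : exists Q, pos_strict_incr Q /\
    forall k i, (ba k <= i < ba k.+1)%N -> Sk k (Q i).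
  by apply: build_Q => k N; rewrite /Sk; case: (odd k); [exact: RigP|exact: ProxP].
exists Q; split => // x y Ax Ay xy.
rewrite AE in Ax Ay; case: Ax => i1 _ Cx; case: Ay => i2 _ Cy.
pose i := maxn i1 i2.
have Cj : forall j, (i <= j)%N -> C j x /\ C j y.
  move=> j ij; split.
    by apply: (Cle i1 j) => //; apply: leq_trans ij; exact: leq_maxl.
  by apply: (Cle i2 j) => //; apply: leq_trans ij; exact: leq_maxr.
have PhiN_le1 : forall n t, PhiN f Q x y n t <= 1.
  move=> n t; rewrite /PhiN ler_pdivrMr ?ltr0Sn // mul1r ler_nat.
  by apply: leq_trans (max_card _) _; rewrite card_ord.
have PhiN_ge0 : forall n t, 0 <= PhiN f Q x y n t.
  by move=> n t; rewrite /PhiN divr_ge0.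
split.
- move=> t t0; rewrite /Phi_star; apply: limsup1 => // e e0 n.
  have hte : 0 < Num.min t e by rewrite lt_min t0 e0.
  have [J HJ] := (@arch_inv R _ hte).
  pose j := maxn i (maxn n J); pose k := j.*2.
  have ij : (i <= j)%N by exact: leq_maxl.
  have nj : (n <= j)%N by rewrite /j (leq_trans _ (leq_maxr _ _)) // leq_maxl.
  have Jj : (J <= j)%N by rewrite /j (leq_trans _ (leq_maxr _ _)) // leq_maxr.
  have Jk : (J <= k)%N by rewrite /k -addnn (leq_trans Jj) // leq_addr.
  have kge := ba_ge k.+1.
  have pq := ba_lt k.
  exists (ba k.+1).-1; split; first by rewrite /k -addnn in kge *; lia.
  have eq1 : (ba k.+1).-1.+1 = ba k.+1 by lia.
  rewrite (@PhiN_split R X f Q x y _ _ (ba k)); last by rewrite eq1 ltnW.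
  rewrite eq1.
  have -> : (\sum_(ba k <= i0 < ba k.+1)
      ((mdist (iter (Q i0) f x) (iter (Q i0) f y) <= t)%R : nat))%N =
      (\sum_(ba k <= i0 < ba k.+1) 1)%N.
    apply: eq_big_nat => i0 hi0.
    have := HQb k i0 hi0; rewrite /Sk /k odd_double doubleK => hP.
    have [cx cy] := Cj j ij.
    have := hP x y cx cy; have := HJ j Jj; rewrite lt_min => /andP[hjt _] h.
    by rewrite (ltW (lt_trans h hjt)).
  rewrite sum_nat_const_nat muln1.
  have := HJ k Jk; rewrite lt_min => /andP[_ hke].
  rewrite [ba k.+1]/=. apply: frac_hi => //.
  exact: leq_addl.
- exists (mdist x y / 3); split.
    by rewrite divr_gt0 // mdist_gt0; apply/eqP.
  rewrite /Phi; apply: liminf0 => // e e0 n.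
  have s0 : 0 < mdist x y / 3 by rewrite divr_gt0 // mdist_gt0; apply/eqP.
  have hte : 0 < Num.min (mdist x y / 3) e by rewrite lt_min s0 e0.
  have [J HJ] := (@arch_inv R _ hte).
  pose j := maxn i (maxn n J); pose k := j.*2.+1.
  have ij : (i <= j)%N by exact: leq_maxl.
  have nj : (n <= j)%N by rewrite /j (leq_trans _ (leq_maxr _ _)) // leq_maxl.
  have Jj : (J <= j)%N by rewrite /j (leq_trans _ (leq_maxr _ _)) // leq_maxr.
  have Jk : (J <= k)%N by rewrite /k -addnn (leq_trans Jj) // ltnW // ltnS leq_addr.
  have kge := ba_ge k.+1.
  have pq := ba_lt k.
  exists (ba k.+1).-1; split; first by rewrite /k -addnn in kge *; lia.
  have eq1 : (ba k.+1).-1.+1 = ba k.+1 by lia.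
  rewrite (@PhiN_split R X f Q x y _ _ (ba k)); last by rewrite eq1 ltnW.
  rewrite eq1.
  have -> : (\sum_(ba k <= i0 < ba k.+1)
      ((mdist (iter (Q i0) f x) (iter (Q i0) f y) <= mdist x y / 3)%R : nat))%N =
      0%N.
    rewrite big_nat_cond; apply: big1 => i0 /andP[hi0 _].
    have := HQb k i0 hi0; rewrite /Sk /k /= odd_double uphalf_double => hR.
    have [cx cy] := Cj j ij.
    have := hR x cx; have := hR y cy.
    have := HJ j Jj; rewrite lt_min => /andP[hjs _] hy hx.
    have t1 : mdist x y <= mdist (iter (Q i0) f x) x + mdist (iter (Q i0) f x) y.
      by rewrite -(metric_sym x (iter (Q i0) f x)); exact: metric_triangle.
    have t2 : mdist (iter (Q i0) f x) y <=
       mdist (iter (Q i0) f x) (iter (Q i0) f y) + mdist (iter (Q i0) f y) y.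
      exact: metric_triangle.
    suff : ~~ (mdist (iter (Q i0) f x) (iter (Q i0) f y) <= mdist x y / 3).
      by move/negbTE ->.
    have hx' : mdist (iter (Q i0) f x) x < mdist x y / 3 := lt_trans hx hjs.
    have hy' : mdist (iter (Q i0) f y) y < mdist x y / 3 := lt_trans hy hjs.
    rewrite -ltNge; lra.
  rewrite addn0.
  have := HJ k Jk; rewrite lt_min => /andP[_ hke].
  change (ba k.+1) with (k.+2 * (ba k).+1)%N; apply: frac_lo => //.
  rewrite -[X in (_ <= X)%N](subn0 (ba k)) -[X in (_ <= X)%N]muln1 -sum_nat_const_nat.
  by apply: leq_sum => i0 _; case: (_ <= _)%R.
Qed.
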